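(* Let $(X,d)$ be a complete metric space with $|X|\geqslant 3$ and let $T\colon X\to X$ be continuous and asymptotically regular, and suppose there exist $\alpha\in[0,\frac12)$ and $\lambda\in[0,\infty)$ such that $$d(Tx,Ty)+d(Ty,Tz)+d(Tx,Tz)\leqslant \alpha\big(d(x,y)+d(y,z)+d(z,x)\big)+\lambda\big(d(x,Tx)+d(y,Ty)+d(z,Tz)\big)$$ for all pairwise distinct $x,y,z\in X$. Then $T$ has a fixed point, and $T$ has at most two fixed points.
   Context: A mapping $T\colon X\to X$ on a metric space is asymptotically regular if $\lim_{n\to\infty}d(T^{n+1}x,T^nx)=0$ for every $x\in X$. *)

(* Defs.v *)
From Stdlib Require Import Reals.
Open Scope R_scope.

Definition is_metric {X : Type} (d : X -> X -> R) : Prop :=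
  (forall x y, 0 <= d x y) /\
  (forall x y, d x y = 0 <-> x = y) /\
  (forall x y, d x y = d y x) /\
  (forall x y z, d x z <= d x y + d y z).

Definition mconverges {X : Type} (d : X -> X -> R) (u : nat -> X) (l : X) : Prop :=
  forall eps, eps > 0 -> exists N : nat, forall n, (n >= N)%nat -> d (u n) l < eps.

Definition mcauchy {X : Type} (d : X -> X -> R) (u : nat -> X) : Prop :=
  forall eps, eps > 0 -> exists N : nat, forall m n, (m >= N)%nat -> (n >= N)%nat ->
    d (u m) (u n) < eps.

Definition mcomplete {X : Type} (d : X -> X -> R) : Prop :=
  forall u : nat -> X, mcauchy d u -> exists l, mconverges d u l.

Definition mcontinuous {X : Type} (d : X -> X -> R) (T : X -> X) : Prop :=
  forall x eps, eps > 0 -> exists delta, delta > 0 /\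
    forall y, d x y < delta -> d (T x) (T y) < eps.

Definition asymptotically_regular {X : Type} (d : X -> X -> R) (T : X -> X) : Prop :=
  forall x, Un_cv (fun n => d (Nat.iter (S n) T x) (Nat.iter n T x)) 0.

(* Main.v *)
Require Import Defs.
From Stdlib Require Import Reals Lra Psatz Classical.
Open Scope R_scope.

Theorem corollary4p8 (X : Type) (d : X -> X -> R) (T : X -> X)
  (alpha lambda : R)
  (Hmet : is_metric d) (Hcomp : mcomplete d)
  (H3 : exists a b c : X, a <> b /\ b <> c /\ a <> c)
  (Hcont : mcontinuous d T) (Hreg : asymptotically_regular d T)
  (Halpha : 0 <= alpha /\ alpha < 1/2) (Hlambda : 0 <= lambda)
  (Hcontr : forall x y z : X, x <> y -> y <> z -> x <> z ->
     d (T x) (T y) + d (T y) (T z) + d (T x) (T z)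
       <= alpha * (d x y + d y z + d z x)
          + lambda * (d x (T x) + d y (T y) + d z (T z))) :
  (exists x : X, T x = x) /\
  (forall x y z : X, T x = x -> T y = y -> T z = z -> x = y \/ y = z \/ x = z).
Proof.
  destruct Hmet as [Hpos [Hzero [Hsym Htri]]].
  destruct Halpha as [Ha0 Ha1].
  split.
  2:{ intros x y z Hx Hy Hz.
      destruct (classic (x = y)) as [|Hxy]; [now left|].
      destruct (classic (y = z)) as [|Hyz]; [now right; left|].
      destruct (classic (x = z)) as [|Hxz]; [now right; right|].
      exfalso. pose proof (Hcontr x y z Hxy Hyz Hxz) as Hc3.
      rewrite Hx, Hy, Hz in Hc3.
      assert (Hxx : d x x = 0) by (apply Hzero; auto).
      assert (Hyy : d y y = 0) by (apply Hzero; auto).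
      assert (Hzz : d z z = 0) by (apply Hzero; auto).
      rewrite Hxx, Hyy, Hzz in Hc3. rewrite (Hsym z x) in Hc3.
      assert (d x y > 0).
      { destruct (Hpos x y) as [|E]; auto. symmetry in E. apply Hzero in E; contradiction. }
      pose proof (Hpos y z). pose proof (Hpos x z). nra. }
  destruct (classic (exists x : X, T x = x)) as [|Hno]; [assumption|].
  exfalso.
  destruct H3 as [x0 _].
  set (x := fun k => Nat.iter k T x0).
  set (e := fun k => d (x k) (x (S k))).
  assert (HxS : forall k, x (S k) = T (x k)) by reflexivity.
  assert (Hne : forall k, x k <> x (S k)).
  { intros k E. apply Hno. exists (x k). rewrite <- HxS. auto. }
  assert (He0 : forall k, 0 <= e k) by (intro; apply Hpos).
  assert (Hkey : forall n m, d (x n) (x m) <= (5 + lambda) * (e n + e m + e (S n))).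
  { intros n m.
    pose proof (He0 n). pose proof (He0 m). pose proof (He0 (S n)).
    destruct (classic (x n = x m)) as [E|E1].
    { rewrite E. assert (d (x m) (x m) = 0) by (apply Hzero; auto). nra. }
    destruct (classic (x m = x (S n))) as [E|E2].
    { rewrite E. fold (e n). nra. }
    pose proof (Hcontr (x n) (x m) (x (S n)) E1 E2 (Hne n)) as Hc3.
    rewrite <- !HxS in Hc3.
    set (D := d (x n) (x m)) in *.
    assert (t1 : D <= e n + d (x (S n)) (x (S m)) + e m).
    { unfold D, e. rewrite (Hsym (x m) (x (S m))).
      pose proof (Htri (x n) (x (S n)) (x m)).
      pose proof (Htri (x (S n)) (x (S m)) (x m)). lra. }
    assert (t2 : D <= e n + e (S n) + d (x (S m)) (x (S (S n))) + e m).
    { unfold D, e. rewrite (Hsym (x m) (x (S m))).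
      rewrite (Hsym (x (S m)) (x (S (S n)))).
      pose proof (Htri (x n) (x (S n)) (x m)).
      pose proof (Htri (x (S n)) (x (S (S n))) (x m)).
      pose proof (Htri (x (S (S n))) (x (S m)) (x m)). lra. }
    assert (t3 : d (x m) (x (S n)) <= D + e n).
    { unfold D, e. rewrite (Hsym (x n) (x m)). apply Htri. }
    assert (t4 : d (x (S n)) (x n) = e n) by (unfold e; apply Hsym).
    rewrite t4 in Hc3.
    assert (Hd : 0 <= D) by apply Hpos.
    pose proof (Hpos (x (S n)) (x (S (S n)))).
    assert (alpha * d (x m) (x (S n)) <= alpha * (D + e n))
      by (apply Rmult_le_compat_l; auto).
    assert (alpha * D <= D / 2) by nra.
    fold (e n) (e m) (e (S n)) in Hc3.
    nra. }
  assert (Hcv : forall eps, eps > 0 -> exists N, forall k, (k >= N)%nat -> e k < eps).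
  { intros eps Heps. destruct (Hreg x0 eps Heps) as [N HN].
    exists N. intros k Hk. specialize (HN k Hk).
    unfold R_dist in HN. rewrite Rminus_0_r in HN.
    unfold e, x. rewrite Hsym. simpl in HN |- *.
    rewrite Rabs_right in HN; [exact HN|]. apply Rle_ge, Hpos. }
  assert (Hcau : mcauchy d x).
  { intros eps Heps.
    destruct (Hcv (eps / (3 * (5 + lambda)))) as [N HN].
    { apply Rdiv_lt_0_compat; lra. }
    exists N. intros m n Hm Hn.
    pose proof (Hkey m n).
    pose proof (HN m Hm). pose proof (HN n Hn). pose proof (HN (S m) ltac:(lia)).
    assert ((5 + lambda) * (e m + e n + e (S m)) < (5+lambda) * (3 * (eps / (3 * (5 + lambda))))).
    { apply Rmult_lt_compat_l; lra. }
    replace ((5+lambda) * (3 * (eps / (3 * (5 + lambda))))) with eps in * by (field; lra).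
    lra. }
  destruct (Hcomp x Hcau) as [l Hl].
  apply Hno. exists l.
  apply Hzero.
  destruct (Hpos (T l) l) as [Hp|]; [|auto].
  exfalso.
  destruct (Hcont l (d (T l) l / 2)) as [del [Hdel Hc]]; [lra|].
  destruct (Hl (Rmin del (d (T l) l / 2))) as [N HN].
  { apply Rmin_pos; lra. }
  pose proof (HN N ltac:(lia)) as h1.
  pose proof (HN (S N) ltac:(lia)) as h2.
  pose proof (Rmin_l del (d (T l) l / 2)). pose proof (Rmin_r del (d (T l) l / 2)).
  assert (h3 : d (T l) (T (x N)) < d (T l) l / 2).
  { apply Hc. rewrite Hsym. lra. }
  rewrite <- HxS in h3.
  pose proof (Htri (T l) (x (S N)) l). lra.
Qed.
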